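(* Let $A$ be an integral domain and let $\mathfrak{p}$ be a prime ideal of $A$. Then $\mathfrak{p}$ is a straight prime ideal of $A$ if and only if $\mathfrak{p}$ is a locally divided prime ideal of $A$, i.e. if and only if $\mathfrak{p}A_\mathfrak{m} = \mathfrak{p}A_\mathfrak{p}$ for every maximal ideal $\mathfrak{m}$ of $A$ containing $\mathfrak{p}$.
   Context: All rings are commutative with identity. An overring of a domain $A$ is a ring $B$ with $A\subseteq B\subseteq \operatorname{Frac}(A)$. A prime ideal $\mathfrak{p}$ of a domain $A$ is divided if $\mathfrak{p}=\mathfrak{p}A_\mathfrak{p}$. It is locally divided if $\mathfrak{p}A_\mathfrak{m}$ is a divided prime of $A_\mathfrak{m}$ for every maximal ideal $\mathfrak{m}\supseteq\mathfrak{p}$, equivalently $\mathfrak{p}A_\mathfrak{m}=\mathfrak{p}A_\mathfrak{p}$ for all such $\mathfrak{m}$. A prime ideal $\mathfrak{p}$ of $A$ is straight (and $A$ is said to be straight at $\mathfrak{p}$) if for every overring $B$ of $A$, the $(A/\mathfrak{p})$-module $B/\mathfrak{p}B$ is torsion-free. *)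

(* Defs.v *)
From HB Require Import structures.
From mathcomp Require Import all_boot all_order all_algebra.
From mathcomp Require Import fraction.
Set Implicit Arguments. Unset Strict Implicit. Unset Printing Implicit Defensive.
Import Order.TTheory GRing.Theory Num.Theory.
Local Open Scope ring_scope.

Notation Frac A := {fraction A}.
Definition emb (A : idomainType) (a : A) : Frac A := @FracField.tofrac A a.

Definition is_ideal (R : comNzRingType) (I : R -> Prop) : Prop :=
  I 0 /\ (forall x y, I x -> I y -> I (x + y)) /\
  (forall r x, I x -> I (r * x)).

Definition is_prime_ideal (R : comNzRingType) (P : R -> Prop) : Prop :=
  is_ideal P /\ ~ P 1 /\ (forall a b, P (a * b) -> P a \/ P b).

Definition is_maximal_ideal (R : comNzRingType) (M : R -> Prop) : Prop :=
  is_ideal M /\ ~ M 1 /\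
  (forall J : R -> Prop, is_ideal J -> (forall x, M x -> J x) ->
     J 1 \/ (forall x, J x -> M x)).

Definition is_overring (A : idomainType) (B : Frac A -> Prop) : Prop :=
  (forall a : A, B (emb a)) /\
  (forall x y, B x -> B y -> B (x - y)) /\
  (forall x y, B x -> B y -> B (x * y)) /\ B 1.

(* The localization A_q, viewed inside Frac(A): { a/s | a in A, s not in q }. *)
Definition loc (A : idomainType) (q : A -> Prop) : Frac A -> Prop :=
  fun x => exists a s : A, ~ q s /\ x = emb a / emb s.

(* The extension pB of an ideal p of A to an overring B (subring of Frac A):
   all finite sums  sum_i p_i b_i  with p_i in p, b_i in B. *)
Definition ext (A : idomainType) (p : A -> Prop) (B : Frac A -> Prop)
  : Frac A -> Prop :=
  fun x => exists n : nat, exists f : 'I_n -> A, exists g : 'I_n -> Frac A,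
    (forall i, p (f i) /\ B (g i)) /\ x = \sum_(i < n) emb (f i) * g i.

Definition locally_divided (A : idomainType) (p : A -> Prop) : Prop :=
  forall m : A -> Prop, is_maximal_ideal m -> (forall x, p x -> m x) ->
    forall x : Frac A, ext p (loc m) x <-> ext p (loc p) x.

(* B/pB is a torsion-free (A/p)-module: for a in A with a mod p <> 0 and
   b in B with (a mod p)(b mod pB) = 0, i.e. a*b in pB, we get b in pB. *)
Definition torsion_free_quotient (A : idomainType) (p : A -> Prop)
  (B : Frac A -> Prop) : Prop :=
  forall (a : A) (b : Frac A), ~ p a -> B b -> ext p B (emb a * b) -> ext p B b.

Definition straight (A : idomainType) (p : A -> Prop) : Prop :=
  forall B : Frac A -> Prop, is_overring B -> torsion_free_quotient p B.

(* Main.v *)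
Require Import Defs.
From mathcomp Require Import all_boot all_order all_algebra.
From mathcomp Require Import fraction.
From mathcomp Require Import ring zify.
Set Implicit Arguments. Unset Strict Implicit. Unset Printing Implicit Defensive.
Import Order.TTheory GRing.Theory Num.Theory.
Local Open Scope ring_scope.
From Stdlib Require Import Classical ClassicalEpsilon.


Lemma fadd (F : fieldType) (a b s t : F) : s != 0 -> t != 0 -> a / s + b / t = (a * t + b * s) / (s * t).
Proof. move=> s0 t0; field; by rewrite s0 t0. Qed.
Lemma fmul (F : fieldType) (a b s t : F) : s != 0 -> t != 0 -> a / s * (b / t) = (a * b) / (s * t).
Proof. move=> s0 t0; field; by rewrite s0 t0. Qed.
Lemma funit (F : fieldType) (a s : F) : s != 0 -> s - a != 0 -> s / (s - a) * (1 - a / s) = 1.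
Proof. move=> s0 t0; field; by rewrite s0 t0. Qed.
Lemma fcancel (F : fieldType) (x y : F) : y != 0 -> y * (x / y) = x.
Proof. move=> s0; field; by rewrite s0. Qed.
Lemma fcross (F : fieldType) (q t a s : F) : t != 0 -> s != 0 -> q / t = a / s -> q * s = a * t.
Proof. move=> t0 s0 e; have -> : q = a / s * t by rewrite -e; field; rewrite t0. field; by rewrite s0. Qed.
Lemma finv (F : fieldType) (q t : F) : t != 0 -> q != 0 -> t / q * (q / t) = 1.
Proof. move=> s0 t0; field; by rewrite s0 t0. Qed.

Section Basics.
Variable A : idomainType.
Local Notation K := {fraction A}.

Lemma embD (a b : A) : emb (a + b) = emb a + emb b. Proof. by rewrite /emb rmorphD. Qed.
Lemma embB (a b : A) : emb (a - b) = emb a - emb b. Proof. by rewrite /emb rmorphB. Qed.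
Lemma embM (a b : A) : emb (a * b) = emb a * emb b. Proof. by rewrite /emb rmorphM. Qed.
Lemma emb1 : emb (1 : A) = 1. Proof. by rewrite /emb rmorph1. Qed.
Lemma emb0 : emb (0 : A) = 0. Proof. by rewrite /emb rmorph0. Qed.
Lemma emb_eq0 (a : A) : (emb a == 0) = (a == 0). Proof. by rewrite /emb tofrac_eq0. Qed.
Lemma emb_inj (a b : A) : emb a = emb b -> a = b.
Proof. by move=> /eqP; rewrite /emb tofrac_eq => /eqP. Qed.

Section Ideal.
Variable Q : A -> Prop.
Hypothesis QI : is_ideal Q.
Lemma id0 : Q 0. Proof. by case: QI. Qed.
Lemma idD x y : Q x -> Q y -> Q (x + y). Proof. by case: QI => _ [] H _; apply: H. Qed.
Lemma idMl r x : Q x -> Q (r * x). Proof. by case: QI => _ [] _ H; apply: H. Qed.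
Lemma idMr r x : Q x -> Q (x * r). Proof. by rewrite mulrC; apply: idMl. Qed.
Lemma idN x : Q x -> Q (- x). Proof. by move=> H; rewrite -mulN1r; apply: idMl. Qed.
Lemma idB x y : Q x -> Q y -> Q (x - y). Proof. by move=> ? ?; apply: idD => //; apply: idN. Qed.
End Ideal.

Lemma prime_ideal (Q : A -> Prop) : is_prime_ideal Q -> is_ideal Q. Proof. by case. Qed.
Lemma prime_n1 (Q : A -> Prop) : is_prime_ideal Q -> ~ Q 1. Proof. by case=> _ []. Qed.
Lemma prime_mul (Q : A -> Prop) a b : is_prime_ideal Q -> ~ Q a -> ~ Q b -> ~ Q (a * b).
Proof. by case=> _ [_ H] na nb /H []. Qed.
Lemma prime_nz (Q : A -> Prop) s : is_prime_ideal Q -> ~ Q s -> s != 0.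
Proof. move=> QP ns; apply/eqP=> s0; apply: ns; rewrite s0; exact: (id0 (prime_ideal QP)). Qed.
Lemma prime_nzK (Q : A -> Prop) s : is_prime_ideal Q -> ~ Q s -> emb s != 0.
Proof. by move=> QP ns; rewrite emb_eq0; apply: prime_nz ns. Qed.

Lemma max_prime (M : A -> Prop) : is_maximal_ideal M -> is_prime_ideal M.
Proof.
move=> [MI [M1 Mmax]]; split=> //; split=> // a b Mab.
case: (classic (M a)) => Ma; [by left|right].
pose J := fun x => exists y r, M y /\ x = y + r * a.
have JI : is_ideal J.
  split; first by exists 0, 0; rewrite mul0r addr0; split=> //; apply: id0.
  split.
    move=> x y [y1 [r1 [My1 ->]]] [y2 [r2 [My2 ->]]].
    exists (y1 + y2), (r1 + r2); split; first exact: idD.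
    by rewrite mulrDl; ring.
  move=> r x [y1 [r1 [My1 ->]]]; exists (r * y1), (r * r1); split; first exact: idMl.
  by ring.
have mJ : forall x, M x -> J x by move=> x Mx; exists x, 0; rewrite mul0r addr0.
case: (Mmax J JI mJ) => [[y [r [My e]]]|JM]; last first.
  exfalso; apply: Ma; apply: JM; exists 0, 1; split; [exact: id0 | by rewrite add0r mul1r].
have -> : b = y * b + r * (a * b) by rewrite mulrA -mulrDl -e mul1r.
apply: idD => //; [exact: idMr | exact: idMl].
Qed.
End Basics.

Section Loc.
Variable A : idomainType.
Local Notation K := {fraction A}.
Variables (p Q : A -> Prop).
Hypothesis QP : is_prime_ideal Q.
Hypothesis pI : is_ideal p.
Hypothesis pQ : forall x, p x -> Q x.

Definition Pm (x : K) := exists a s, p a /\ ~ Q s /\ x = emb a / emb s.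

Let QI := prime_ideal QP.
Let Q1 := prime_n1 QP.

Lemma loc_frac a s : ~ Q s -> loc Q (emb a / emb s).
Proof. by move=> ns; exists a, s. Qed.

Lemma loc_emb a : loc Q (emb a).
Proof. by exists a, 1; split=> //; rewrite emb1 divr1. Qed.

Lemma loc0 : loc Q 0. Proof. by rewrite -emb0; apply: loc_emb. Qed.
Lemma loc1 : loc Q 1. Proof. by rewrite -emb1; apply: loc_emb. Qed.

Lemma loc_add x y : loc Q x -> loc Q y -> loc Q (x + y).
Proof.
move=> [a [s [ns ->]]] [b [t [nt ->]]].
exists (a * t + b * s), (s * t); split; first exact: prime_mul.
have s0 := prime_nzK QP ns; have t0 := prime_nzK QP nt.
by rewrite embD !embM; apply: fadd.
Qed.

Lemma loc_mul x y : loc Q x -> loc Q y -> loc Q (x * y).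
Proof.
move=> [a [s [ns ->]]] [b [t [nt ->]]].
exists (a * b), (s * t); split; first exact: prime_mul.
have s0 := prime_nzK QP ns; have t0 := prime_nzK QP nt.
by rewrite !embM; apply: fmul.
Qed.

Lemma loc_opp x : loc Q x -> loc Q (- x).
Proof.
move=> Hx; rewrite -mulN1r; apply: loc_mul => //.
by exists (-1), 1; split=> //; rewrite emb1 divr1 /emb rmorphN1.
Qed.

Lemma loc_sub x y : loc Q x -> loc Q y -> loc Q (x - y).
Proof. by move=> ? ?; apply: loc_add => //; apply: loc_opp. Qed.

Lemma loc_sum n (F : 'I_n -> K) : (forall i, loc Q (F i)) -> loc Q (\sum_(i < n) F i).
Proof. by move=> H; apply: (big_ind (loc Q)) => //; [apply: loc0 | apply: loc_add]. Qed.

Lemma Pm_loc x : Pm x -> loc Q x.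
Proof. by move=> [a [s [_ [ns ->]]]]; apply: loc_frac. Qed.

Lemma Pm0 : Pm 0.
Proof. by exists 0, 1; rewrite emb0 mul0r; split=> //; apply: id0. Qed.

Lemma Pm_emb a : p a -> Pm (emb a).
Proof. by exists a, 1; rewrite emb1 divr1. Qed.

Lemma PmD x y : Pm x -> Pm y -> Pm (x + y).
Proof.
move=> [a [s [pa [ns ->]]]] [b [t [pb [nt ->]]]].
exists (a * t + b * s), (s * t); split; first by apply: idD => //; apply: idMr.
split; first exact: prime_mul.
have s0 := prime_nzK QP ns; have t0 := prime_nzK QP nt.
by rewrite embD !embM; apply: fadd.
Qed.

Lemma Pm_mull r x : loc Q r -> Pm x -> Pm (r * x).
Proof.
move=> [a [s [ns ->]]] [b [t [pb [nt ->]]]].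
exists (a * b), (s * t); split; first by apply: idMl.
split; first exact: prime_mul.
have s0 := prime_nzK QP ns; have t0 := prime_nzK QP nt.
by rewrite !embM; apply: fmul.
Qed.

Lemma Pm_mulr r x : loc Q r -> Pm x -> Pm (x * r).
Proof. by rewrite mulrC; apply: Pm_mull. Qed.

Lemma PmN x : Pm x -> Pm (- x).
Proof. by move=> H; rewrite -mulN1r; apply: Pm_mull => //; apply: loc_opp; apply: loc1. Qed.

Lemma Pm_sum n (F : 'I_n -> K) : (forall i, Pm (F i)) -> Pm (\sum_(i < n) F i).
Proof. by move=> H; apply: (big_ind Pm) => //; [apply: Pm0 | apply: PmD]. Qed.

Lemma Pm_unit c : Pm c -> exists w, loc Q w /\ w * (1 - c) = 1.
Proof.
move=> [a [s [pa [ns ->]]]].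
have nsa : ~ Q (s - a).
  move=> H; apply: ns; have -> : s = (s - a) + a by rewrite subrK.
  by apply: idD => //; apply: pQ.
exists (emb s / emb (s - a)); split; first exact: loc_frac.
have s0 := prime_nzK QP ns; have sa0 := prime_nzK QP nsa.
move: sa0; rewrite embB => sa0.
exact: funit.
Qed.

Lemma ext_Pm x : ext p (loc Q) x <-> Pm x.
Proof.
split.
  move=> [n [f [g [H ->]]]]; apply: Pm_sum => i.
  have [pf lg] := H i; rewrite mulrC; apply: Pm_mull => //; exact: Pm_emb.
move=> [a [s [pa [ns ->]]]].
exists 1%N, (fun _ => a), (fun _ => emb 1 / emb s); split.
  by move=> _; split=> //; apply: loc_frac.
by rewrite big_ord1 emb1 mul1r.
Qed.
End Loc.

Section Poly.
Variable A : idomainType.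
Local Notation K := {fraction A}.
Variables (p Q : A -> Prop).
Hypothesis QP : is_prime_ideal Q.
Hypothesis pI : is_ideal p.
Hypothesis pQ : forall x, p x -> Q x.

Definition polyring (S : K -> Prop) (v : K) : K -> Prop :=
  fun y => exists T : {poly K}, (forall i, S T`_i) /\ y = T.[v].

Lemma loc_coefM (T1 T2 : {poly K}) :
  (forall i, loc Q T1`_i) -> (forall i, loc Q T2`_i) -> forall i, loc Q (T1 * T2)`_i.
Proof.
move=> H1 H2 i; rewrite coefM; apply: loc_sum => // j.
by apply: loc_mul.
Qed.

Lemma polyring_over v : is_overring (polyring (loc Q) v).
Proof.
split.
  move=> a; exists (emb a)%:P; split; last by rewrite hornerC.
  by move=> i; rewrite coefC; case: eqP => _; [apply: loc_emb | apply: loc0].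
split.
  move=> x y [T1 [H1 ->]] [T2 [H2 ->]]; exists (T1 - T2); split.
    by move=> i; rewrite coefB; apply: loc_sub.
  by rewrite hornerD hornerN.
split.
  move=> x y [T1 [H1 ->]] [T2 [H2 ->]]; exists (T1 * T2); split.
    exact: loc_coefM.
  by rewrite hornerM.
exists 1%:P; split; last by rewrite hornerC.
by move=> i; rewrite coefC; case: eqP => _; [apply: loc1 | apply: loc0].
Qed.

Lemma ext_polyring v y : ext p (polyring (loc Q) v) y ->
  exists T : {poly K}, (forall i, Pm p Q T`_i) /\ y = T.[v].
Proof.
move=> [n [f [g [H ->]]]].
have {}H : forall i, p (f i) /\ exists T : {poly K}, (forall j, loc Q T`_j) /\ g i = T.[v].
  by move=> i; have [? [T [? ?]]] := H i; split=> //; exists T.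
have [T HT] : exists T : 'I_n -> {poly K}, forall i, (forall j, loc Q (T i)`_j) /\ g i = (T i).[v].
  pose C := fun i => constructive_indefinite_description _ (proj2 (H i)).
  exists (fun i => sval (C i)) => i; exact: (svalP (C i)).
exists (\sum_(i < n) emb (f i) *: T i); split.
  move=> j; rewrite coef_sum; apply: Pm_sum => // i; rewrite coefZ.
  apply: Pm_mulr => //; first by case: (HT i) => /(_ j).
  by apply: Pm_emb; case: (H i).
rewrite horner_sum; apply: eq_bigr => i _; rewrite hornerZ; congr (_ * _).
by case: (HT i).
Qed.

Section Red.
Variable I : K -> Prop.
Hypothesis I0 : I 0.
Hypothesis ID : forall x y, I x -> I y -> I (x + y).
Hypothesis IM : forall r x, loc Q r -> I x -> I (r * x).

Lemma red (u : K) d (G : {poly K}) : (forall i, loc Q G`_i) -> (size G <= d)%N ->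
  u ^+ d = G.[u] -> forall H : {poly K}, (forall i, I H`_i) ->
  exists H' : {poly K}, (forall i, I H'`_i) /\ (size H' <= d)%N /\ H'.[u] = H.[u].
Proof.
move=> GR Gs Gu H.
move: {2}(size H) (leqnn (size H)) => n; elim: n H => [|n IH] H Hs HI.
  by exists H; split=> //; split=> //; apply: leq_trans Hs _.
case: (leqP (size H) d) => Hd; first by exists H.
pose H1 := take_poly d H + G * drop_poly d H.
have H1s : (size H1 <= n)%N.
  apply: leq_trans (size_polyD _ _) _; rewrite geq_max; apply/andP; split.
    apply: leq_trans (size_take_poly _ _) _.
    by rewrite -ltnS; apply: leq_trans Hd Hs.
  apply: leq_trans (size_polyMleq _ _) _.
  rewrite size_drop_poly.
  move: Gs Hd Hs; lia.
have H1I : forall i, I H1`_i.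
  move=> i; rewrite coefD coef_take_poly; apply: ID.
    by case: ifP => _ //.
  rewrite coefM; apply: (big_ind I) => //.
  by move=> j _; apply: IM => //; rewrite coef_drop_poly.
have [H' [H'I [H's H'u]]] := IH H1 H1s H1I.
exists H'; split=> //; split=> //; rewrite H'u.
rewrite /H1 -[in RHS](poly_take_drop d H) !hornerD !hornerM hornerXn -Gu.
by rewrite mulrC.
Qed.
End Red.
End Poly.

Section Nak.
Variable A : idomainType.
Local Notation K := {fraction A}.
Variables (p Q : A -> Prop).
Hypothesis QP : is_prime_ideal Q.
Hypothesis pI : is_ideal p.
Hypothesis pQ : forall x, p x -> Q x.

Local Notation loc0 := (@loc0 _ Q QP).
Local Notation loc1 := (@loc1 _ Q QP).
Local Notation loc_add := (@loc_add _ Q QP).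
Local Notation loc_mul := (@loc_mul _ Q QP).
Local Notation loc_sum := (@loc_sum _ Q QP).
Local Notation Pm_mull := (@Pm_mull _ p Q QP pI).
Local Notation PmD := (@PmD _ p Q QP pI).
Local Notation Pm0 := (@Pm0 _ p Q QP pI).
Local Notation Pm_unit := (@Pm_unit _ p Q QP pQ).

Lemma nak (k : nat) (g : 'I_k -> K) :
  (forall i, exists r (c : 'I_k -> K), loc Q r /\ (forall j, Pm p Q (c j)) /\
      g i = r + \sum_(j < k) c j * g j) ->
  forall i, loc Q (g i).
Proof.
elim: k g => [|k IH] g Hg; first by case.
pose wd := widen_ord (leqnSn k).
have [r [c [lr [Pc e]]]] := Hg ord_max.
rewrite big_ord_recr /= in e.
set S := \sum_(j < k) _ in e.
have [w [lw hw]] := Pm_unit (Pc ord_max).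
have e' : (1 - c ord_max) * g ord_max = r + S.
  rewrite mulrBl mul1r {1}e; ring.
have gl : g ord_max = w * r + \sum_(j < k) (w * c (wd j)) * g (wd j).
  rewrite -[g ord_max]mul1r -hw -mulrA e' mulrDr /S mulr_sumr.
  by congr (_ + _); apply: eq_bigr => j _; rewrite mulrA.
pose g' := fun j : 'I_k => g (wd j).
have IHg : forall j, loc Q (g' j).
  apply: IH => i.
  have [ri [ci [lri [Pci ei]]]] := Hg (wd i).
  rewrite big_ord_recr /= in ei.
  exists (ri + ci ord_max * (w * r)),
         (fun j => ci (wd j) + ci ord_max * (w * c (wd j))); split.
    apply: loc_add => //; apply: loc_mul; [exact: Pm_loc (Pci _) | exact: loc_mul].
  split.
    move=> j; apply: PmD => //; apply: Pm_mull => //; first exact: Pm_loc (Pci _).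
    exact: Pm_mull.
  rewrite /g' ei gl mulrDr mulr_sumr.
  under [X in _ = _ + X]eq_bigr do rewrite mulrDl.
  rewrite big_split /=.
  have -> : \sum_(i0 < k) ci ord_max * (w * c (wd i0) * g (wd i0)) =
            \sum_(i0 < k) ci ord_max * (w * c (wd i0)) * g (wd i0).
    by apply: eq_bigr => j _; rewrite mulrA.
  rewrite /wd; ring.
have lgl : loc Q (g ord_max).
  rewrite gl; apply: loc_add; first exact: loc_mul.
  apply: loc_sum => // j; apply: loc_mul; last exact: IHg.
  by apply: Pm_loc; apply: Pm_mull.
move=> i; case: (ltnP i k) => h.
  have -> : i = wd (Ordinal h) by apply: val_inj.
  exact: IHg.
have -> : i = ord_max by apply: val_inj => /=; apply/eqP; rewrite eqn_leq h -ltnS ltn_ord.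
exact: lgl.
Qed.
End Nak.

Section Fwd.
Variable A : idomainType.
Local Notation K := {fraction A}.
Variables (p m : A -> Prop).
Hypothesis pP : is_prime_ideal p.
Hypothesis mP : is_prime_ideal m.
Hypothesis pm : forall x, p x -> m x.
Hypothesis st : straight p.
Let pI := prime_ideal pP.

Local Notation loc0 := (@loc0 _ m mP).
Local Notation loc1 := (@loc1 _ m mP).
Local Notation loc_add := (@loc_add _ m mP).
Local Notation loc_mul := (@loc_mul _ m mP).
Local Notation loc_sum := (@loc_sum _ m mP).
Local Notation Pm_mull := (@Pm_mull _ p m mP pI).
Local Notation PmD := (@PmD _ p m mP pI).
Local Notation Pm0 := (@Pm0 _ p m mP pI).
Local Notation Pm_unit := (@Pm_unit _ p m mP pm).

Lemma polyring_X v : polyring (loc m) v v.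
Proof.
exists 'X; split; last by rewrite hornerX.
by move=> i; rewrite coefX; case: eqP => _; [apply: loc1 | apply: loc0].
Qed.

Lemma polyring_1 v : polyring (loc m) v 1.
Proof. by case: (polyring_over mP v) => _ [_ [_ ]]. Qed.

Lemma fwd_key q t : p q -> ~ p t -> Pm p m (emb q / emb t).
Proof.
move=> pq npt.
have [q0|q0] := eqVneq q 0.
  by rewrite q0 emb0 mul0r; exact: Pm0.
have t0 := prime_nzK pP npt.
have q0' : emb q != 0 by rewrite emb_eq0.
set u := emb q / emb t; set v := emb t / emb q.
have uv : v * u = 1 by rewrite /u /v; apply: finv.
have e1 : ext p (polyring (loc m) v) 1.
  apply: (st (polyring_over mP v) npt (polyring_1 v)).
  exists 1%N, (fun _ => q), (fun _ => v); split; first by move=> _; split=> //; apply: polyring_X.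
  by rewrite big_ord1 mulr1 /v fcancel.
have [S [SP S1]] := ext_polyring mP pI e1.
have [d [G [GR [Gs Gu]]]] : exists d (G : {poly K}), (forall i, loc m G`_i) /\
    (size G <= d)%N /\ u ^+ d = G.[u].
  move: S1; rewrite horner_coef.
  case Sn: (size S) => [|d]; first by rewrite big_ord0 => /eqP; rewrite oner_eq0.
  rewrite big_ord_recl /= expr0 mulr1 => S1.
  have [w [lw hw]] := Pm_unit (SP 0%N).
  exists d, (\sum_(i < d) (w * S`_i.+1) *: 'X^(d - i.+1)); split.
    move=> j; rewrite coef_sum; apply: loc_sum => // i; rewrite coefZ coefXn.
    case: eqP => _; rewrite ?mulr1 ?mulr0; last exact: loc0.
    by apply: loc_mul => //; apply: Pm_loc (SP _).
  split.
    apply: (big_ind (fun P : {poly K} => size P <= d)%N) => //.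
      by rewrite size_poly0.
      by move=> x y hx hy; apply: leq_trans (size_polyD _ _) _; rewrite geq_max hx hy.
    move=> i _; apply: leq_trans (size_scale_leq _ _) _.
    by rewrite size_polyXn subnSK // leq_subr.
  have E : (1 - S`_0) * u ^+ d = \sum_(i < d) S`_i.+1 * u ^+ (d - i.+1).
    rewrite mulrBl mul1r -{1}[u ^+ d]mul1r {1}S1 mulrDl addrAC subrr add0r mulr_suml.
    apply: eq_bigr => i _; rewrite ?lift0 -mulrA; congr (_ * _).
    rewrite /bump leq0n add1n.
    rewrite [u ^+ d](_ : _ = u ^+ (d - i.+1) * u ^+ i.+1); last by rewrite -exprD subnK.
    by rewrite mulrCA -exprMn uv expr1n mulr1.
  rewrite horner_sum -[u ^+ d]mul1r -hw -mulrA E mulr_sumr.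
  apply: eq_bigr => i _; rewrite hornerZ hornerXn -mulrA //.
have e2 : ext p (polyring (loc m) u) u.
  apply: (st (polyring_over mP u) npt (polyring_X u)).
  exists 1%N, (fun _ => q), (fun _ => 1); split; first by move=> _; split=> //; apply: polyring_1.
  by rewrite big_ord1 mulr1 /u fcancel.
have [T [TP Tu]] := ext_polyring mP pI e2.
have IM : forall r x, loc m r -> Pm p m x -> Pm p m (r * x) by move=> r x; apply: Pm_mull.
have I0 : Pm p m 0 by exact: Pm0.
have ID : forall x y, Pm p m x -> Pm p m y -> Pm p m (x + y) by move=> x y; apply: PmD.
have [T' [T'P [T's T'u]]] := red I0 ID IM GR Gs Gu TP.
rewrite -Tu in T'u.
have lu : loc m u.
  case: d Gs Gu T's => [|d] Gs Gu T's.
    move: T's; rewrite leqn0 size_poly_eq0 => /eqP T'0.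
    by rewrite -T'u T'0 horner0; apply: loc0.
  pose g := fun j : 'I_d => u ^+ j.+1.
  have expand : forall H : {poly K}, (size H <= d.+1)%N ->
      H.[u] = H`_0 + \sum_(i < d) H`_i.+1 * g i.
    move=> H Hs; rewrite (horner_coef_wide _ Hs) big_ord_recl /= expr0 mulr1.
    by congr (_ + _); apply: eq_bigr => i _; rewrite ?lift0.
  have gl : forall j, loc m (g j).
    apply: (nak mP pI pm) => j.
    have Hj : forall i, Pm p m ('X^j * T')`_i.
      by move=> i; rewrite coefXnM; case: ifP => _ //.
    have [Tj [TjP [Tjs Tju]]] := red I0 ID IM GR Gs Gu Hj.
    exists Tj`_0, (fun i => Tj`_i.+1); split; first exact: Pm_loc (TjP _).
    split=> //.
    rewrite -expand // Tju hornerM hornerXn T'u /g exprSr //.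
  rewrite -T'u (expand _ T's); apply: loc_add; first exact: Pm_loc (T'P _).
  apply: loc_sum => // i; apply: loc_mul; [exact: Pm_loc (T'P _) | exact: gl].
move: lu => [a [s [ns ue]]].
exists a, s; split; last by split.
have s0 := prime_nzK mP ns.
have : emb (q * s) = emb (a * t).
  by rewrite !embM; apply: fcross ue.
move=> /emb_inj e.
have : p (a * t) by rewrite -e; apply: idMr.
by case: pP => _ [_ H] /H [].
Qed.

Lemma fwd_ld : forall x : K, ext p (loc m) x <-> ext p (loc p) x.
Proof.
move=> x; rewrite (ext_Pm mP pI) (ext_Pm pP pI); split.
  by move=> [a [s [pa [ns ->]]]]; exists a, s; split=> //; split=> // /pm.
move=> [a [s [pa [ns ->]]]]; exact: fwd_key.
Qed.
End Fwd.

From mathcomp Require classical_sets boolp.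

Section Zorn.
Variable A : idomainType.

Lemma exists_max (J : A -> Prop) : is_ideal J -> ~ J 1 ->
  exists m, is_maximal_ideal m /\ forall x, J x -> m x.
Proof.
move=> JI J1.
pose P := fun I : A -> Prop => I = (fun _ => False) \/
  (is_ideal I /\ (forall x, J x -> I x) /\ ~ I 1).
have PF : forall X, P X -> forall x, X x -> is_ideal X /\ (forall x, J x -> X x) /\ ~ X 1.
  by move=> X [-> //|//].
have := @classical_sets.Zorn_bigcup A P.
case.
  move=> F FP Ftot.
  case: (classic (exists x, exists2 X, F X & X x)) => [[x0 [X0 FX0 X0x0]]|nU]; last first.
    left; apply: boolp.funext => x; apply: boolp.propext; split => // Ux.
    by apply: nU; exists x.
  have [X0I [JX0 X01]] := PF X0 (FP X0 FX0) x0 X0x0.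
  right; split; last split.
  - split; first by exists X0 => //; apply: id0.
    split.
      move=> x y [X FX Xx] [Y FY Yy].
      case: (Ftot X Y FX FY) => [XY|YX].
        have [YI _] := PF Y (FP Y FY) y Yy.
        by exists Y => //; apply: idD => //; apply: XY.
      have [XI _] := PF X (FP X FX) x Xx.
      by exists X => //; apply: idD => //; apply: YX.
    move=> r x [X FX Xx]; have [XI _] := PF X (FP X FX) x Xx.
    by exists X => //; apply: idMl.
  - by move=> x Jx; exists X0 => //; apply: JX0.
  - move=> [X FX X1]; have [_ [_ ]] := PF X (FP X FX) 1 X1; by [].
move=> M [PM maxM].
have M0 : exists x, M x.
  case: PM => [M0|[MI _]]; last by exists 0; apply: id0.
  exfalso; apply: (maxM J); last by right.
  rewrite M0; split; first by move=> ?.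
  by move=> /(_ 0 (id0 JI)).
have [MI [JM M1]] : is_ideal M /\ (forall x, J x -> M x) /\ ~ M 1.
  by case: M0 => x Mx; apply: PF Mx.
exists M; split => //; split => //; split => // J2 J2I MJ2.
case: (classic (J2 1)) => [|n1]; first by left.
right; apply: NNPP => nsub.
apply: (maxM J2); last by right; split=> //; split=> // x /JM /MJ2.
by split => // h; apply: nsub => x /h.
Qed.
End Zorn.

Section Bwd.
Variable A : idomainType.
Local Notation K := {fraction A}.
Variables (p : A -> Prop) (B : K -> Prop).
Hypothesis ov : is_overring B.

Lemma ov_emb a : B (emb a). Proof. by case: ov. Qed.
Lemma ov_mul x y : B x -> B y -> B (x * y). Proof. by case: ov => _ [_ [H _]]; apply: H. Qed.

Lemma ext0 : ext p B 0.
Proof. by exists 0%N, (fun _ => 0), (fun _ => 0); split; [case | rewrite big_ord0]. Qed.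

Lemma ext_single f g : p f -> B g -> ext p B (emb f * g).
Proof. by move=> pf Bg; exists 1%N, (fun _ => f), (fun _ => g); rewrite big_ord1. Qed.

Lemma ext_add x y : ext p B x -> ext p B y -> ext p B (x + y).
Proof.
move=> [n1 [f1 [g1 [H1 ->]]]] [n2 [f2 [g2 [H2 ->]]]].
exists (n1 + n2)%N,
  (fun i => match split i with inl j => f1 j | inr j => f2 j end),
  (fun i => match split i with inl j => g1 j | inr j => g2 j end); split.
  by move=> i; case: (split i).
rewrite big_split_ord; congr (_ + _); apply: eq_bigr => j _.
  by have /= -> := unsplitK (inl j : 'I_n1 + 'I_n2).
by have /= -> := unsplitK (inr j : 'I_n1 + 'I_n2).
Qed.

Lemma ext_mulB r y : B r -> ext p B y -> ext p B (r * y).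
Proof.
move=> Br [n [f [g [H ->]]]].
exists n, f, (fun i => r * g i); split.
  by move=> i; have [? ?] := H i; split=> //; apply: ov_mul.
by rewrite mulr_sumr; apply: eq_bigr => i _; rewrite mulrCA.
Qed.

Hypothesis pI : is_ideal p.
Variable m : A -> Prop.
Hypothesis mP : is_prime_ideal m.

Lemma bwd_key n (z g : 'I_n -> K) : (forall i, Pm p m (z i) /\ B (g i)) ->
  exists s, ~ m s /\ ext p B (emb s * \sum_(i < n) z i * g i).
Proof.
elim: n z g => [|n IH] z g H.
  exists 1; split; first exact: prime_n1.
  by rewrite big_ord0 mulr0; apply: ext0.
rewrite big_ord_recr /=.
have [s1 [ns1 e1]] := IH (fun i => z (widen_ord (leqnSn n) i)) (fun i => g (widen_ord (leqnSn n) i)) (fun i => H _).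
have [[x [s2 [px [ns2 ze]]]] Bg] := H ord_max.
exists (s1 * s2); split; first exact: prime_mul.
set S := \sum_(i < n) _ in e1 *.
have -> : emb (s1 * s2) * (S + z ord_max * g ord_max) =
   emb s2 * (emb s1 * S) + emb s1 * ((emb s2 * z ord_max) * g ord_max).
  by rewrite embM; ring.
rewrite ze fcancel; last exact: prime_nzK mP ns2.
apply: ext_add; apply: ext_mulB => //; solve [exact: ov_emb | exact: ext_single].
Qed.
End Bwd.

Lemma bwd (A : idomainType) (p : A -> Prop) : is_prime_ideal p ->
  locally_divided p -> straight p.
Proof.
move=> pP LD B ov a b npa Bb eab.
have pI := prime_ideal pP.
apply: NNPP => nb.
pose J := fun c => ext p B (emb c * b).
have JI : is_ideal J.
  split; first by rewrite /J emb0 mul0r; apply: ext0.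
  split.
    by move=> x y Jx Jy; rewrite /J embD mulrDl; apply: ext_add.
  by move=> r x Jx; rewrite /J embM -mulrA; apply: ext_mulB => //; apply: ov_emb.
have J1 : ~ J 1 by rewrite /J emb1 mul1r.
have [m [mM Jm]] := exists_max JI J1.
have mP := max_prime mM.
have pJ : forall x, p x -> J x by move=> x px; apply: ext_single => //.
have pm : forall x, p x -> m x by move=> x /pJ /Jm.
move: eab => [n [f [g [H e]]]].
have a0 := prime_nzK pP npa.
have eb : b = \sum_(i < n) (emb (f i) / emb a) * g i.
  have -> : b = (emb a)^-1 * (emb a * b) by rewrite mulrA mulVf // mul1r.
  rewrite e mulr_sumr; apply: eq_bigr => i _.
  by rewrite mulrA [X in X * _]mulrC.
have [s [ns Js]] : exists s, ~ m s /\ J s.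
  rewrite /J eb; apply: bwd_key => // i; have [pf Bg] := H i; split=> //.
  apply/(ext_Pm mP pI); apply/(LD m mM pm); apply/(ext_Pm pP pI).
  by exists (f i), a.
by apply: ns; apply: Jm.
Qed.

Unset Implicit Arguments.
Set Strict Implicit.
Theorem theorem3p1 (A : idomainType) (p : A -> Prop) :
  is_prime_ideal p -> (straight p <-> locally_divided p).
Proof.
move=> pP; split; last exact: bwd.
move=> st m mM pm; apply: fwd_ld => //; exact: max_prime.
Qed.
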